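(* Let $n=3$. For a $3\times3$ signature matrix $\varepsilon$, an $\varepsilon$-$\mathrm{SL}_2$-tiling of $\mathbb{Z}^3$ exists if and only if $\varepsilon_{12}\varepsilon_{13}\varepsilon_{23}=-1$; in particular there are exactly $4$ signature matrices $\varepsilon$ for which an $\varepsilon$-$\mathrm{SL}_2$-tiling of $\mathbb{Z}^3$ exists. For each such $\varepsilon$ the $\varepsilon$-$\mathrm{SL}_2$-tiling is unique up to translation, i.e. any two $\varepsilon$-$\mathrm{SL}_2$-tilings $(a_{\mathbf{i}})$, $(b_{\mathbf{i}})$ satisfy $b_{\mathbf{i}}=a_{\mathbf{i}+\mathbf{t}}$ for all $\mathbf{i}$ for some fixed $\mathbf{t}\in\mathbb{Z}^3$.
   Context: Write $\mathbf{i}=(i_1,\dots,i_n)\in\mathbb{Z}^n$ and $\mathbf{e}_k$ for the $k$-th standard unit vector. A signature matrix is a symmetric $n\times n$ matrix $\varepsilon=(\varepsilon_{k\ell})$ with $\varepsilon_{k\ell}\in\{1,-1\}$ for $k\ne\ell$ and $\varepsilon_{kk}=-1$. Given a signature matrix $\varepsilon$, an array $(a_{\mathbf{i}})_{\mathbf{i}\in\mathbb{Z}^n}$ with all $a_{\mathbf{i}}\in\mathbb{Z}_{>0}$ is an $\varepsilon$-$\mathrm{SL}_2$-tiling of $\mathbb{Z}^n$ if for all $\mathbf{i}\in\mathbb{Z}^n$ and all $k\ne\ell$: $a_{\mathbf{i}+\mathbf{e}_\ell}a_{\mathbf{i}+\mathbf{e}_k}-a_{\mathbf{i}}a_{\mathbf{i}+\mathbf{e}_k+\mathbf{e}_\ell}=\varepsilon_{k\ell}$.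 *)

(* Defs.v *)
(* Z^n is modelled as integer row vectors 'rV[int]_n;
   indices 1..n of the paper are the ordinals 0..n-1. *)
From HB Require Import structures.
From mathcomp Require Import all_boot all_order all_algebra.
Set Implicit Arguments. Unset Strict Implicit. Unset Printing Implicit Defensive.
Import Order.TTheory GRing.Theory Num.Theory.
Local Open Scope ring_scope.

Definition unitv (n : nat) (k : 'I_n) : 'rV[int]_n := delta_mx 0 k.

Definition is_signature (n : nat) (eps : 'M[int]_n) : Prop :=
  eps^T = eps /\
  (forall k l : 'I_n, k != l -> eps k l = 1 \/ eps k l = -1) /\
  (forall k : 'I_n, eps k k = -1).

Definition is_SL2_tiling (n : nat) (eps : 'M[int]_n) (a : 'rV[int]_n -> int) : Prop :=
  (forall i, 0 < a i) /\
  (forall (i : 'rV[int]_n) (k l : 'I_n), k != l ->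
     a (i + unitv l) * a (i + unitv k) - a i * a (i + unitv k + unitv l) = eps k l).

(* Main.v *)
Require Import Defs.
From HB Require Import structures.
From mathcomp Require Import all_boot all_order all_algebra.
From mathcomp Require Import zify ring lra.
From Stdlib Require Import Classical.
Import Order.TTheory GRing.Theory Num.Theory.
Local Open Scope ring_scope.

Lemma int_ind_both (P : int -> Prop) :
  P 0 -> (forall n, P n -> P (n + 1)) -> (forall n, P (n + 1) -> P n) -> forall n, P n.
Proof.
move=> P0 Pf Pb.
have hp : forall m : nat, P m%:Z.
  elim=> [//|m IH]; rewrite intS addrC; exact: Pf.
have hn : forall m : nat, P (- m%:Z).
  elim=> [|m IH]; first by rewrite oppr0.
  apply: Pb; have -> : - (m.+1)%:Z + 1 = - m%:Z by rewrite intS opprD addrAC subrr add0r.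
  exact: IH.
by case=> m; [apply: hp | rewrite NegzE; apply: hn].
Qed.

Lemma cancel_r (x y z : int) : 0 < z -> x * z = y * z -> x = y.
Proof. by move=> /lt0r_neq0 hz; apply: mulIf. Qed.

Lemma pm1 (e : int) : e = 1 \/ e = -1 -> e * e = 1.
Proof. by case=> ->. Qed.

Lemma cube (x xk xl xm xkl xkm xlm xklm ekl ekm elm : int) :
  0 < x -> 0 < xk -> 0 < xl ->
  (ekl = 1 \/ ekl = -1) -> (ekm = 1 \/ ekm = -1) -> (elm = 1 \/ elm = -1) ->
  x * xkl = xk * xl - ekl -> x * xkm = xk * xm - ekm -> x * xlm = xl * xm - elm ->
  xk * xklm = xkl * xkm - elm -> xl * xklm = xkl * xlm - ekm ->
  (ekm = elm -> xk = xl) /\ (ekm = - elm -> xkl = x).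
Proof.
move=> hx hk hl hekl hekm helm H1 H2 H3 H4 H5.
have e1 : x ^+ 2 * (xk * xklm) = (xk * xl - ekl) * (xk * xm - ekm) - elm * x ^+ 2.
  by rewrite H4 -H1 -H2; ring.
have e2 : x ^+ 2 * (xl * xklm) = (xk * xl - ekl) * (xl * xm - elm) - ekm * x ^+ 2.
  by rewrite H5 -H1 -H3; ring.
have E : xl * (x ^+ 2 * (xk * xklm)) = xk * (x ^+ 2 * (xl * xklm)) by ring.
rewrite e1 e2 in E.
have key : (xk * xl - ekl) * (elm * xk - ekm * xl) = x ^+ 2 * (elm * xl - ekm * xk).
  by move: E; lia.
split=> He.
- have : (xk - xl) * (xk * xl - ekl + x ^+ 2) * elm = 0.
    by rewrite He in key; move: key; lia.
  move/eqP; rewrite !mulf_eq0 => /orP[/orP[|]|].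
  + by rewrite subr_eq0 => /eqP.
  + move/eqP => h; exfalso; case: hekl h => ->; nia.
  + by case: helm => -> /eqP.
- have : (xk + xl) * (xk * xl - ekl - x ^+ 2) * elm = 0.
    by rewrite He in key; move: key; lia.
  move/eqP; rewrite !mulf_eq0 => /orP[/orP[|]|].
  + move/eqP => h; exfalso; lia.
  + move/eqP => h; apply: (@cancel_r _ _ x) => //; rewrite mulrC H1; lia.
  + by case: helm => -> /eqP.
Qed.

Lemma minimizer (g : int -> int) : (forall t, 0 < g t) ->
  exists t0, forall t, g t0 <= g t.
Proof.
move=> gp.
suff H : forall n : nat, forall t, g t <= n%:Z -> exists t0, forall t, g t0 <= g t.
  apply: (H (absz (g 0)) 0); rewrite abszE; exact: ler_norm.
elim=> [|n IH] t ht; first by have := gp t; lia.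
case: (classic (exists s, g s <= n%:Z)) => [[s hs]|hno]; first exact: (IH s).
exists t => s.
have : ~ (g s <= n%:Z) by move=> h; apply: hno; exists s.
lia.
Qed.

Lemma noseq (g : int -> int) : (forall t, 0 < g t) ->
  (forall t, g t * g (t + 1 + 1) = g (t + 1) ^+ 2 - 1) -> False.
Proof.
move=> gp rec; have [t0 ht0] := minimizer g gp.
have := rec (t0 - 1); rewrite subrK.
have := ht0 (t0 - 1); have := ht0 (t0 + 1); have := gp t0.
nia.
Qed.

Lemma prod_ne1 (u v : int) : 2 <= u -> 0 <= v -> u * v <> 1.
Proof.
move=> hu hv; have [->|hv1] : v = 0 \/ 1 <= v by lia.
  by rewrite mulr0.
nia.
Qed.

Lemma ones (g : int -> int) : (forall t, 0 < g t) ->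
  (forall t, g t * g (t + 1 + 1) = g (t + 1) ^+ 2 + 1) ->
  exists m, g m = 1 /\ g (m + 1) = 1.
Proof.
move=> gp rec; have [t0 ht0] := minimizer g gp.
have h := rec (t0 - 1); rewrite subrK in h.
have h1 := ht0 (t0 - 1); have h2 := ht0 (t0 + 1); have h0 := gp t0.
have [e|ne] := eqVneq (g (t0 - 1)) (g t0).
  exists (t0 - 1); rewrite subrK.
  have : g t0 * (g (t0 + 1) - g t0) = 1 by move: h; rewrite e; lia.
  move=> hh; have : g t0 = 1.
    have [//|hg] : g t0 = 1 \/ 2 <= g t0 by lia.
    exfalso; move: hh; apply: prod_ne1 => //; lia.
  by move=> e1; rewrite e e1.
have [e'|ne'] := eqVneq (g (t0 + 1)) (g t0).
  exists t0.
  have : g t0 * (g (t0 - 1) - g t0) = 1 by move: h; rewrite e'; lia.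
  move=> hh; have : g t0 = 1.
    have [//|hg] : g t0 = 1 \/ 2 <= g t0 by lia.
    exfalso; move: hh; apply: prod_ne1 => //; lia.
  by move=> e1; rewrite e' e1.
exfalso.
have l1 : g t0 + 1 <= g (t0 - 1) by move: ne; lia.
have l2 : g t0 + 1 <= g (t0 + 1) by move: ne'; lia.
nia.
Qed.

Lemma seq_unique (g h : int -> int) m m' :
  (forall t, 0 < g t) -> (forall t, 0 < h t) ->
  (forall t, g t * g (t + 1 + 1) = g (t + 1) ^+ 2 + 1) ->
  (forall t, h t * h (t + 1 + 1) = h (t + 1) ^+ 2 + 1) ->
  g m = 1 -> g (m + 1) = 1 -> h m' = 1 -> h (m' + 1) = 1 ->
  forall t, h t = g (t + (m - m')).
Proof.
move=> gp hp rg rh g0 g1 h0 h1.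
have P : forall u, h (m' + u) = g (m + u) /\ h (m' + u + 1) = g (m + u + 1).
  apply: int_ind_both.
  - by rewrite !addr0 g0 g1 h0 h1.
  - move=> u [e0 e1]; rewrite !addrA; split=> //.
    apply: (@cancel_r _ _ (h (m' + u))) => //.
    rewrite mulrC rh e1 e0 mulrC rg //.
  - move=> u []; rewrite !addrA => e1 e2; split=> //.
    apply: (@cancel_r _ _ (h (m' + u + 1 + 1))) => //.
    rewrite rh e1 e2 -rg //.
move=> t; have [e _] := P (t - m').
have -> : t = m' + (t - m') by ring.
rewrite e; congr g; ring.
Qed.

Fixpoint F (n : nat) : int :=
  match n with
  | 0%N => 1
  | 1%N => 1
  | (m.+1 as k).+1 => 3 * F k - F m
  end.

Lemma F_mono n : 1 <= F n <= F n.+1.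
Proof.
elim: n => [|n IH] //=.
move: IH; case: n => [|n] //=; rewrite ?expr2; lia.
Qed.

Lemma F_inv n : F n.+1 ^+ 2 - 3 * F n.+1 * F n + F n ^+ 2 = -1.
Proof.
elim: n => [|n IH] //=.
move: IH; case: n => [|n] /=; rewrite ?expr2; lia.
Qed.

Lemma F_rec n : F n * F n.+2 = F n.+1 ^+ 2 + 1.
Proof. have := F_inv n; rewrite /=; case: n => [|n] //=; lia. Qed.

Definition f (s : int) : int :=
  match s with Posz n => F n | Negz n => F n.+2 end.

Lemma f_pos s : 0 < f s.
Proof.
case: s => n; [change (0 < F n); have := F_mono n | change (0 < F n.+2); have := F_mono n.+2]; rewrite ?expr2; lia.
Qed.

Lemma f_rec s : f s * f (s + 1 + 1) = f (s + 1) ^+ 2 + 1.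
Proof.
case: s => [n|[|[|n]]].
- have -> : Posz n + 1 + 1 = Posz n.+2 by lia.
  have -> : Posz n + 1 = Posz n.+1 by lia.
  exact: F_rec.
- by [].
- by [].
- have -> : Negz n.+2 + 1 + 1 = Negz n by rewrite !NegzE; rewrite ?expr2; lia.
  have -> : Negz n.+2 + 1 = Negz n.+1 by rewrite !NegzE; rewrite ?expr2; lia.
  change (F n.+4 * F n.+2 = F n.+3 ^+ 2 + 1); rewrite mulrC; exact: F_rec.
Qed.

Lemma fw (s u v : int) : (u = 1 \/ u = -1) -> (v = 1 \/ v = -1) ->
  f (s + v) * f (s + u) - f s * f (s + u + v) = - (u * v).
Proof.
have r := f_rec.
case=> ->; case=> ->.
- have := r s; rewrite ?expr2; lia.
- have := r (s - 1); rewrite subrK addrK; rewrite ?expr2; lia.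
- have := r (s - 1); rewrite subrK; rewrite ?expr2; lia.
- have := r (s - 1 - 1); rewrite subrK subrK; rewrite ?expr2; lia.
Qed.

Definition o0 : 'I_3 := @Ordinal 3 0 isT.
Definition o1 : 'I_3 := @Ordinal 3 1 isT.
Definition o2 : 'I_3 := @Ordinal 3 2 isT.

Definition mk (x y z : int) : 'rV[int]_3 := \row_(j < 3) [:: x; y; z]`_j.

Lemma mkE (i : 'rV[int]_3) : i = mk (i 0 o0) (i 0 o1) (i 0 o2).
Proof.
apply/rowP => j; rewrite mxE; case: j => [[|[|[|k]]] hj] //=;
  by congr (i 0 _); apply: val_inj.
Qed.

Lemma mk0 (x y z : int) : mk x y z 0 o0 = x. Proof. by rewrite mxE. Qed.
Lemma mk1 (x y z : int) : mk x y z 0 o1 = y. Proof. by rewrite mxE. Qed.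
Lemma mk2 (x y z : int) : mk x y z 0 o2 = z. Proof. by rewrite mxE. Qed.

Lemma mkD (x y z : int) (x' y' z' : int) : mk x y z + mk x' y' z' = mk (x + x') (y + y') (z + z').
Proof. by apply/rowP => j; rewrite !mxE; case: j => [[|[|[|k]]] hj]. Qed.

Lemma unitv0 : unitv o0 = mk 1 0 0.
Proof. by apply/rowP => j; rewrite !mxE; case: j => [[|[|[|k]]] hj]. Qed.
Lemma unitv1 : unitv o1 = mk 0 1 0.
Proof. by apply/rowP => j; rewrite !mxE; case: j => [[|[|[|k]]] hj]. Qed.
Lemma unitv2 : unitv o2 = mk 0 0 1.
Proof. by apply/rowP => j; rewrite !mxE; case: j => [[|[|[|k]]] hj]. Qed.

Section Faces.
Variables (eps : 'M[int]_3) (a : 'rV[int]_3 -> int).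
Hypothesis Ha : is_SL2_tiling eps a.

Lemma F12 (x y z : int) : a (mk x (y + 1) z) * a (mk (x + 1) y z)
   - a (mk x y z) * a (mk (x + 1) (y + 1) z) = eps o0 o1.
Proof. by have := Ha.2 (mk x y z) o0 o1 isT; rewrite unitv0 unitv1 !mkD ?addr0 ?add0r. Qed.
Lemma F13 (x y z : int) : a (mk x y (z + 1)) * a (mk (x + 1) y z)
   - a (mk x y z) * a (mk (x + 1) y (z + 1)) = eps o0 o2.
Proof. by have := Ha.2 (mk x y z) o0 o2 isT; rewrite unitv0 unitv2 !mkD ?addr0 ?add0r. Qed.
Lemma F23 (x y z : int) : a (mk x y (z + 1)) * a (mk x (y + 1) z)
   - a (mk x y z) * a (mk x (y + 1) (z + 1)) = eps o1 o2.
Proof. by have := Ha.2 (mk x y z) o1 o2 isT; rewrite unitv1 unitv2 !mkD ?addr0 ?add0r. Qed.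
End Faces.

Lemma signs (u v : int) : (u = 1 \/ u = -1) -> (v = 1 \/ v = -1) ->
  (u = v /\ u * v = 1) \/ (u = - v /\ u * v = -1).
Proof. by case=> ->; case=> ->; [left|right|right|left]. Qed.

Section Struct.
Variables (eps : 'M[int]_3) (a : 'rV[int]_3 -> int).
Hypothesis Hs : is_signature eps.
Hypothesis Ha : is_SL2_tiling eps a.

Let e12 : int := eps o0 o1.
Let e13 : int := eps o0 o2.
Let e23 : int := eps o1 o2.

Lemma s12 : e12 = 1 \/ e12 = -1. Proof. exact: Hs.2.1 o0 o1 isT. Qed.
Lemma s13 : e13 = 1 \/ e13 = -1. Proof. exact: Hs.2.1 o0 o2 isT. Qed.
Lemma s23 : e23 = 1 \/ e23 = -1. Proof. exact: Hs.2.1 o1 o2 isT. Qed.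

Let A (x y z : int) := a (mk x y z).
Let pos x y z : 0 < A x y z. Proof. exact: Ha.1. Qed.

Lemma cube12 (x y z : int) :
  (e13 = e23 -> A (x + 1) y z = A x (y + 1) z) /\
  (e13 = - e23 -> A (x + 1) (y + 1) z = A x y z).
Proof.
have f1 := (@F12 eps a Ha); have f2 := (@F13 eps a Ha); have f3 := (@F23 eps a Ha).
apply: (@cube (A x y z) (A (x + 1) y z) (A x (y + 1) z) (A x y (z + 1))
  (A (x + 1) (y + 1) z) (A (x + 1) y (z + 1)) (A x (y + 1) (z + 1))
  (A (x + 1) (y + 1) (z + 1)) e12 e13 e23) => //; try exact: s12; try exact: s13;
  try exact: s23; rewrite /A /e12 /e13 /e23.
- have := f1 x y z; lia.
- have := f2 x y z; lia.
- have := f3 x y z; lia.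
- have := f3 (x + 1) y z; lia.
- have := f2 x (y + 1) z; lia.
Qed.

Lemma cube13 (x y z : int) :
  (e12 = e23 -> A (x + 1) y z = A x y (z + 1)) /\
  (e12 = - e23 -> A (x + 1) y (z + 1) = A x y z).
Proof.
have f1 := (@F12 eps a Ha); have f2 := (@F13 eps a Ha); have f3 := (@F23 eps a Ha).
apply: (@cube (A x y z) (A (x + 1) y z) (A x y (z + 1)) (A x (y + 1) z)
  (A (x + 1) y (z + 1)) (A (x + 1) (y + 1) z) (A x (y + 1) (z + 1))
  (A (x + 1) (y + 1) (z + 1)) e13 e12 e23) => //; try exact: s12; try exact: s13;
  try exact: s23; rewrite /A /e12 /e13 /e23.
- have := f2 x y z; lia.
- have := f1 x y z; lia.
- have := f3 x y z; lia.
- have := f3 (x + 1) y z; lia.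
- have := f1 x y (z + 1); lia.
Qed.

Let sg2 : int := e13 * e23.
Let sg3 : int := e12 * e23.

Lemma R2 (x y z : int) : A x (y + 1) z = A (x + sg2) y z.
Proof.
case: (@signs _ _ s13 s23) => [[e h]|[e h]]; rewrite /sg2 h.
- by rewrite (cube12 x y z).1.
- by have := (cube12 (x - 1) y z).2 e; rewrite subrK.
Qed.

Lemma R3 (x y z : int) : A x y (z + 1) = A (x + sg3) y z.
Proof.
case: (@signs _ _ s12 s23) => [[e h]|[e h]]; rewrite /sg3 h.
- by rewrite (cube13 x y z).1.
- by have := (cube13 (x - 1) y z).2 e; rewrite subrK.
Qed.

Lemma invY (z y : int) : forall x, A x y z = A (x + sg2 * y) 0 z.
Proof.
elim/int_ind_both: y => [|y IH|y IH] x.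
- by rewrite mulr0 addr0.
- rewrite R2 IH; congr A; ring.
- rewrite -{1}(subrK sg2 x) -R2 IH; congr A; ring.
Qed.

Lemma invZ (z : int) : forall x, A x 0 z = A (x + sg3 * z) 0 0.
Proof.
elim/int_ind_both: z => [|z IH|z IH] x.
- by rewrite mulr0 addr0.
- rewrite R3 IH; congr A; ring.
- rewrite -{1}(subrK sg3 x) -R3 IH; congr A; ring.
Qed.

Lemma invA (x y z : int) : A x y z = A (x + sg2 * y + sg3 * z) 0 0.
Proof. by rewrite invY invZ. Qed.

Lemma inv_all i : a i = a (mk (i 0 o0 + sg2 * i 0 o1 + sg3 * i 0 o2) 0 0).
Proof. by rewrite {1}(mkE i); apply: invA. Qed.

Lemma grec (t : int) : A t 0 0 * A (t + 1 + 1) 0 0 = A (t + 1) 0 0 ^+ 2 - e12 * e13 * e23.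
Proof.
rewrite -mulrA.
case: (@signs _ _ s13 s23) => [[e h]|[e h]]; rewrite h.
- have := (@F12 eps a Ha) t 0 0; rewrite -!/(A _ _ _).
  have -> : A t (0 + 1) 0 = A (t + 1) 0 0.
    by rewrite invA /sg2 h add0r mulr1 mulr0 addr0.
  have -> : A (t + 1) (0 + 1) 0 = A (t + 1 + 1) 0 0.
    by rewrite invA /sg2 h add0r mulr1 mulr0 addr0.
  rewrite /e12 expr2; lia.
- have := (@F12 eps a Ha) (t + 1) 0 0; rewrite -!/(A _ _ _).
  have -> : A (t + 1) (0 + 1) 0 = A t 0 0.
    by rewrite invA /sg2 h add0r mulr1 mulr0 addr0 addrK.
  have -> : A (t + 1 + 1) (0 + 1) 0 = A (t + 1) 0 0.
    by rewrite invA /sg2 h add0r mulr1 mulr0 addr0 addrK.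
  rewrite /e12 expr2; lia.
Qed.

End Struct.

Lemma ord3 (k : 'I_3) : k = o0 \/ k = o1 \/ k = o2.
Proof.
case: k => [[|[|[|m]]] hk]; [left|right;left|right;right|by []]; exact: val_inj.
Qed.

Lemma inord0 : (inord 0 : 'I_3) = o0. Proof. by apply: val_inj; rewrite /= inordK. Qed.
Lemma inord1 : (inord 1 : 'I_3) = o1. Proof. by apply: val_inj; rewrite /= inordK. Qed.
Lemma inord2 : (inord 2 : 'I_3) = o2. Proof. by apply: val_inj; rewrite /= inordK. Qed.

Lemma symE (eps : 'M[int]_3) : is_signature eps -> forall k l, eps l k = eps k l.
Proof. by case=> h _ k l; rewrite -{1}h mxE. Qed.

Lemma struct_ex (eps : 'M[int]_3) a : is_signature eps -> is_SL2_tiling eps a ->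
  exists g : int -> int, (forall t, 0 < g t) /\
    (forall t, g t * g (t + 1 + 1) = g (t + 1) ^+ 2 - eps o0 o1 * eps o0 o2 * eps o1 o2) /\
    (forall i, a i = g (i 0 o0 + eps o0 o2 * eps o1 o2 * i 0 o1
                         + eps o0 o1 * eps o1 o2 * i 0 o2)).
Proof.
move=> Hs Ha; exists (fun t => a (mk t 0 0)); split; [|split].
- by move=> t; exact: Ha.1.
- exact: (@grec _ _ Hs Ha).
- exact: (@inv_all _ _ Hs Ha).
Qed.

Lemma prod_pm (p q r : int) : (p = 1 \/ p = -1) -> (q = 1 \/ q = -1) -> (r = 1 \/ r = -1) ->
  p * q * r = 1 \/ p * q * r = -1.
Proof. by case=> ->; case=> ->; case=> ->; [left|right|right|left|right|left|left|right]. Qed.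

Lemma exist_dir (eps : 'M[int]_3) : is_signature eps -> (exists a, is_SL2_tiling eps a) ->
  eps o0 o1 * eps o0 o2 * eps o1 o2 = -1.
Proof.
move=> Hs [a Ha]; have [g [gp [gr _]]] := @struct_ex _ _ Hs Ha.
case: (@prod_pm _ _ _ (@s12 _ Hs) (@s13 _ Hs) (@s23 _ Hs)) => // h1.
exfalso; apply: (@noseq _ gp) => t; rewrite gr h1 //.
Qed.

Section Constr.
Variable eps : 'M[int]_3.
Hypothesis Hs : is_signature eps.
Hypothesis Hp : eps o0 o1 * eps o0 o2 * eps o1 o2 = -1.

Let L (i : 'rV[int]_3) : int := i 0 o0 + (- eps o0 o1) * i 0 o1 + (- eps o0 o2) * i 0 o2.

Lemma LD i j : L (i + j) = L i + L j.
Proof. rewrite /L !mxE; ring. Qed.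

Lemma Lw k : (L (unitv k) = 1 \/ L (unitv k) = -1).
Proof.
case: (ord3 k) => [->|[->|->]]; rewrite /L !mxE /= ?mulr0 ?mulr1 ?addr0 ?add0r; first by left.
- by case: (@s12 _ Hs) => ->; [right|left].
- by case: (@s13 _ Hs) => ->; [right|left].
Qed.

Lemma Leps k l : k != l -> eps k l = - (L (unitv k) * L (unitv l)).
Proof.
have h12 := @s12 _ Hs; have h13 := @s13 _ Hs; have h23 := @s23 _ Hs.
have sy := @symE _ Hs.
case: (ord3 k) => [->|[->|->]]; case: (ord3 l) => [->|[->|->]] // _;
  rewrite ?(sy o0 o1) ?(sy o0 o2) ?(sy o1 o2) /L !mxE /= ?mulr0 ?mulr1 ?addr0 ?add0r;
  move: Hp; case: h12 => ->; case: h13 => ->; case: h23 => ->; lia.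
Qed.

Lemma constr : is_SL2_tiling eps (fun i => f (L i)).
Proof.
split; first by move=> i; exact: f_pos.
move=> i k l hkl; rewrite !LD (@Leps _ _ hkl).
exact: (@fw (L i) _ _ (Lw k) (Lw l)).
Qed.
End Constr.

Lemma exist_iff (eps : 'M[int]_3) : is_signature eps ->
  (exists a, is_SL2_tiling eps a) <-> eps o0 o1 * eps o0 o2 * eps o1 o2 = -1.
Proof.
move=> Hs; split; first exact: exist_dir.
move=> Hp; eexists; exact: (@constr _ Hs Hp).
Qed.

Definition Mx (p q r : int) : 'M[int]_3 :=
  \matrix_(i, j) (if i == j then -1 else if (i + j == 1)%N then p
                  else if (i + j == 2)%N then q else r).

Lemma Mx01 p q r : Mx p q r o0 o1 = p. Proof. by rewrite mxE. Qed.
Lemma Mx02 p q r : Mx p q r o0 o2 = q. Proof. by rewrite mxE. Qed.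
Lemma Mx12 p q r : Mx p q r o1 o2 = r. Proof. by rewrite mxE. Qed.

Lemma Mx_sig (p q r : int) : (p = 1 \/ p = -1) -> (q = 1 \/ q = -1) -> (r = 1 \/ r = -1) ->
  is_signature (Mx p q r).
Proof.
move=> hp hq hr; split; [|split].
- apply/matrixP => i j; rewrite !mxE.
  by case: (ord3 i) => [->|[->|->]]; case: (ord3 j) => [->|[->|->]].
- move=> k l; rewrite !mxE.
  by case: (ord3 k) => [->|[->|->]]; case: (ord3 l) => [->|[->|->]].
- by move=> k; rewrite !mxE eqxx.
Qed.

Lemma sig_Mx (eps : 'M[int]_3) : is_signature eps ->
  eps = Mx (eps o0 o1) (eps o0 o2) (eps o1 o2).
Proof.
move=> Hs; have sy := @symE _ Hs; have dg := Hs.2.2.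
apply/matrixP => i j; rewrite !mxE.
case: (ord3 i) => [->|[->|->]]; case: (ord3 j) => [->|[->|->]] //=;
  by rewrite ?dg ?sy.
Qed.

Lemma mem_good (p q r : int) : (p = 1 \/ p = -1) -> (q = 1 \/ q = -1) -> (r = 1 \/ r = -1) ->
  p * q * r = -1 -> is_signature (Mx p q r) /\ exists a, is_SL2_tiling (Mx p q r) a.
Proof.
move=> hp hq hr h; have Hs := @Mx_sig _ _ _ hp hq hr; split => //.
by apply/(@exist_iff _ Hs); rewrite !Mx01 !Mx02 !Mx12.
Qed.

Definition Ms := [:: Mx (-1) (-1) (-1); Mx (-1) 1 1; Mx 1 (-1) 1; Mx 1 1 (-1)].

Lemma part2 : exists s : seq 'M[int]_3, uniq s /\ size s = 4%N /\
     forall eps : 'M[int]_3,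
       eps \in s <-> (is_signature eps /\ exists a, is_SL2_tiling eps a).
Proof.
exists Ms; split; [|split] => //.
- apply: (@map_uniq _ _ (fun M : 'M[int]_3 => (M o0 o1, M o0 o2, M o1 o2))).
  by rewrite /= !Mx01 !Mx02 !Mx12.
- move=> eps; split.
  + by rewrite !inE => /or4P [] /eqP ->; apply: mem_good => //; (try by left); right.
  + case=> Hs /(@exist_iff _ Hs) hp.
    rewrite (@sig_Mx _ Hs) !inE.
    move: hp; case: (@s12 _ Hs) => ->; case: (@s13 _ Hs) => ->; case: (@s23 _ Hs) => ->;
    rewrite ?eqxx ?orbT //.
Qed.

Lemma part3 (eps : 'M[int]_3) : is_signature eps ->
  eps o0 o1 * eps o0 o2 * eps o1 o2 = -1 ->
  forall a b : 'rV[int]_3 -> int,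
    is_SL2_tiling eps a -> is_SL2_tiling eps b ->
    exists t : 'rV[int]_3, forall i, b i = a (i + t).
Proof.
move=> Hs hp a b Ha Hb.
have [g [gp [gr ga]]] := @struct_ex _ _ Hs Ha.
have [h [hpos [hr hb]]] := @struct_ex _ _ Hs Hb.
rewrite hp opprK in gr hr.
have [m [g0 g1]] := @ones _ gp gr.
have [m' [h0 h1]] := @ones _ hpos hr.
have U := @seq_unique _ _ m m' gp hpos gr hr g0 g1 h0 h1.
exists (mk (m - m') 0 0) => i.
rewrite hb ga U !mxE /=; congr g; ring.
Qed.

Theorem corollary2p5 :
  (forall eps : 'M[int]_3, is_signature eps ->
     ((exists a, is_SL2_tiling eps a) <->
      eps (inord 0) (inord 1) * eps (inord 0) (inord 2) * eps (inord 1) (inord 2) = -1))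
  /\
  (exists s : seq 'M[int]_3, uniq s /\ size s = 4%N /\
     forall eps : 'M[int]_3,
       eps \in s <-> (is_signature eps /\ exists a, is_SL2_tiling eps a))
  /\
  (forall eps : 'M[int]_3, is_signature eps ->
     eps (inord 0) (inord 1) * eps (inord 0) (inord 2) * eps (inord 1) (inord 2) = -1 ->
     forall a b : 'rV[int]_3 -> int,
       is_SL2_tiling eps a -> is_SL2_tiling eps b ->
       exists t : 'rV[int]_3, forall i, b i = a (i + t)).
Proof.
rewrite inord0 inord1 inord2.
split; [|split].
- exact: exist_iff.
- exact: part2.
- exact: part3.
Qed.
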